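(* Let $\mathcal{H},\mathcal{K}$ be complex Hilbert spaces, let $\Phi:\mathcal{B}(\mathcal{H})\to\mathcal{B}(\mathcal{K})$ be a unital positive linear map, and let $A,B\in\mathcal{B}(\mathcal{H})$ with $A$ positive invertible and $mA\le B\le MA$ for some scalars $0<m<M$. Then $$\Phi(BA^{-1}B)\le\left(\frac{M+m}{2\sqrt{Mm}}\right)^2\Phi(B)\Phi(A)^{-1}\Phi(B).$$
   Context: $\le$ is the Löwner order. A linear map is positive if it maps positive operators to positive operators, and unital if it maps $I$ to $I$. *)

(* Defs.v *)
From HB Require Import structures.
From mathcomp Require Import all_boot all_order all_algebra.
From mathcomp Require Import complex.
From mathcomp Require Import reals.
Set Implicit Arguments. Unset Strict Implicit. Unset Printing Implicit Defensive.
Import Order.TTheory GRing.Theory Num.Theory.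
Local Open Scope ring_scope.

Section Hilbert.
Variables (R : realType).
Local Notation C := R[i].
Variable (V : lmodType C).
Variable (ip : V -> V -> C).

Definition hnorm (x : V) : C := sqrtC (ip x x).

Record isHilbert : Prop := IsHilbert {
  ip_linl : forall (a : C) (x y z : V), ip (a *: x + y) z = a * ip x z + ip y z;
  ip_conj : forall x y : V, ip y x = (ip x y)^*;
  ip_ge0 : forall x : V, 0 <= ip x x;
  ip_def : forall x : V, ip x x = 0 -> x = 0;
  ip_complete : forall u : nat -> V,
    (forall e : C, 0 < e -> exists N : nat, forall n k : nat,
        (N <= n)%N -> (N <= k)%N -> hnorm (u n - u k) < e) ->
    exists l : V, forall e : C, 0 < e -> exists N : nat, forall n : nat,
        (N <= n)%N -> hnorm (u n - l) < e
}.

Definition bounded_op (T : V -> V) : Prop :=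
  (forall (a : C) (x y : V), T (a *: x + y) = a *: T x + T y) /\
  (exists K : C, forall x : V, hnorm (T x) <= K * hnorm x).

Definition pos_op (T : V -> V) : Prop := forall x : V, 0 <= ip (T x) x.

Definition loewner_le (S T : V -> V) : Prop := pos_op (fun x => T x - S x).

Definition is_inverse (T Tinv : V -> V) : Prop :=
  bounded_op Tinv /\ (forall x, T (Tinv x) = x) /\ (forall x, Tinv (T x) = x).

Definition op_scale (c : C) (T : V -> V) : V -> V := fun x => c *: T x.

End Hilbert.

Definition unital_pos_linear (R : realType) (V W : lmodType R[i])
    (ipV : V -> V -> R[i]) (ipW : W -> W -> R[i])
    (Phi : (V -> V) -> (W -> W)) : Prop :=
  (forall T, bounded_op ipV T -> bounded_op ipW (Phi T)) /\
  (forall (a : R[i]) S T, bounded_op ipV S -> bounded_op ipV T ->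
     Phi (fun x => a *: S x + T x) = (fun y => a *: Phi S y + Phi T y)) /\
  (forall T, bounded_op ipV T -> pos_op ipV T -> pos_op ipW (Phi T)) /\
  Phi id = id.

Definition cR (R : realType) (x : R) : R[i] := (x%:C)%C.

(* Main.v *)
Require Import Defs.
From HB Require Import structures.
From mathcomp Require Import all_boot all_order all_algebra.
From mathcomp Require Import complex.
From mathcomp Require Import reals.
From mathcomp Require Import ring lra.
From Stdlib Require Import ClassicalEpsilon FunctionalExtensionality.
Set Implicit Arguments. Unset Strict Implicit. Unset Printing Implicit Defensive.
Import Order.TTheory GRing.Theory Num.Theory.
Local Open Scope ring_scope.

Lemma dbl0 (Z : zmodType) (x : Z) : x = x + x -> x = 0.
Proof. by rewrite -{1}[x]addr0 => /addrI <-. Qed.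

Section CFacts.
Variable R : realType.
Local Notation C := R[i].
Local Notation Re := complex.Re.
Local Notation Im := complex.Im.

Lemma ReD (x y : C) : Re (x + y) = Re x + Re y. Proof. by case: x; case: y. Qed.
Lemma ImD (x y : C) : Im (x + y) = Im x + Im y. Proof. by case: x; case: y. Qed.
Lemma ReN (x : C) : Re (- x) = - Re x. Proof. by case: x. Qed.
Lemma ImN (x : C) : Im (- x) = - Im x. Proof. by case: x. Qed.
Lemma ReB (x y : C) : Re (x - y) = Re x - Re y. Proof. by rewrite ReD ReN. Qed.
Lemma ImB (x y : C) : Im (x - y) = Im x - Im y. Proof. by rewrite ImD ImN. Qed.
Lemma ReM (x y : C) : Re (x * y) = Re x * Re y - Im x * Im y. Proof. by case: x; case: y. Qed.
Lemma ImM (x y : C) : Im (x * y) = Re x * Im y + Im x * Re y. Proof. by case: x; case: y. Qed.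
Lemma ReJ (x : C) : Re (x^*) = Re x. Proof. by case: x. Qed.
Lemma ImJ (x : C) : Im (x^*) = - Im x. Proof. by case: x. Qed.
Lemma ReR (r : R) : Re (r%:C)%C = r. Proof. by []. Qed.
Lemma ImR (r : R) : Im (r%:C)%C = 0. Proof. by []. Qed.
Lemma Re0 : Re (0 : C) = 0. Proof. by []. Qed.
Lemma Im0 : Im (0 : C) = 0. Proof. by []. Qed.
Lemma Re1 : Re (1 : C) = 1. Proof. by []. Qed.
Lemma Im1 : Im (1 : C) = 0. Proof. by []. Qed.

Lemma ReRM (r : R) (w : C) : Re ((r%:C)%C * w) = r * Re w.
Proof. by case: w => a b /=; rewrite mul0r subr0. Qed.
Lemma ImRM (r : R) (w : C) : Im ((r%:C)%C * w) = r * Im w.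
Proof. by case: w => a b /=; rewrite mul0r addr0. Qed.

Lemma ge0C (z : C) : 0 <= z -> Im z = 0 /\ 0 <= Re z.
Proof. by rewrite lecE => /andP[/eqP h1 h2]; split. Qed.
Lemma ge0C' (z : C) : Im z = 0 -> 0 <= Re z -> 0 <= z.
Proof. by move=> h1 h2; rewrite lecE h1 eqxx. Qed.
Lemma ceq (x y : C) : Re x = Re y -> Im x = Im y -> x = y.
Proof. by case: x; case: y => /= a b c d -> ->. Qed.

End CFacts.

Section Hilb.
Variable R : realType.
Local Notation C := R[i].
Local Notation Re := complex.Re.
Local Notation Im := complex.Im.
Variable V : lmodType C.
Variable ip : V -> V -> C.
Hypothesis H : isHilbert ip.

Definition nq (x : V) : R := Re (ip x x).
Definition nr (x : V) : R := Num.sqrt (nq x).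
Definition lin (T : V -> V) := forall (a : C) (x y : V), T (a *: x + y) = a *: T x + T y.

Lemma ip0l z : ip 0 z = 0.
Proof.
have := ip_linl H 1 0 0 z; rewrite scale1r addr0 mul1r; exact: dbl0.
Qed.
Lemma ipDl x y z : ip (x + y) z = ip x z + ip y z.
Proof. by have := ip_linl H 1 x y z; rewrite scale1r mul1r. Qed.
Lemma ipZl a x z : ip (a *: x) z = a * ip x z.
Proof. by have := ip_linl H a x 0 z; rewrite addr0 ip0l addr0. Qed.
Lemma ipNl x z : ip (- x) z = - ip x z.
Proof. by rewrite -scaleN1r ipZl mulN1r. Qed.
Lemma ipBl x y z : ip (x - y) z = ip x z - ip y z.
Proof. by rewrite ipDl ipNl. Qed.
Lemma ipDr x y z : ip z (x + y) = ip z x + ip z y.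
Proof. by rewrite ip_conj // ipDl rmorphD /= -!(ip_conj H). Qed.
Lemma ipZr a x z : ip z (a *: x) = a^* * ip z x.
Proof. by rewrite ip_conj // ipZl rmorphM /= -!(ip_conj H). Qed.
Lemma ipNr x z : ip z (- x) = - ip z x.
Proof. by rewrite ip_conj // ipNl rmorphN /= -!(ip_conj H). Qed.
Lemma ipBr x y z : ip z (x - y) = ip z x - ip z y.
Proof. by rewrite ipDr ipNr. Qed.
Lemma ip0r z : ip z 0 = 0.
Proof. by rewrite ip_conj // ip0l conjC0. Qed.

Lemma ReipC x y : Re (ip y x) = Re (ip x y).
Proof. by rewrite (ip_conj H) ReJ. Qed.

Lemma nq_ge0 x : 0 <= nq x.
Proof. by have [] := ge0C (ip_ge0 H x). Qed.
Lemma ipxx_Im x : Im (ip x x) = 0.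
Proof. by have [] := ge0C (ip_ge0 H x). Qed.
Lemma ipxxE x : ip x x = ((nq x)%:C)%C.
Proof. by apply: ceq => //=; rewrite ipxx_Im. Qed.
Lemma nq0 x : nq x = 0 -> x = 0.
Proof. by move=> h; apply: (ip_def H); rewrite ipxxE h. Qed.
Lemma nr_ge0 x : 0 <= nr x. Proof. exact: sqrtr_ge0. Qed.
Lemma nr_sqr x : nr x ^+ 2 = nq x. Proof. by rewrite sqr_sqrtr // nq_ge0. Qed.
Lemma hnormE x : hnorm ip x = ((nr x)%:C)%C.
Proof.
rewrite /hnorm ipxxE -nr_sqr.
have -> : (((nr x) ^+ 2)%:C)%C = ((nr x)%:C)%C ^+ 2 :> C by rewrite rmorphXn.
by rewrite sqrCK // ler0c nr_ge0.
Qed.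

Lemma linT (T : V -> V) : lin T -> T 0 = 0.
Proof.
move=> hT; have := hT 1 0 0; rewrite !scale1r addr0 => h; exact: (dbl0 h).
Qed.
Lemma linD T : lin T -> forall x y, T (x + y) = T x + T y.
Proof. by move=> hT x y; rewrite -[x]scale1r hT !scale1r. Qed.
Lemma linZ T : lin T -> forall a x, T (a *: x) = a *: T x.
Proof. by move=> hT a x; rewrite -[a *: x]addr0 hT linT // addr0. Qed.
Lemma linN T : lin T -> forall x, T (- x) = - T x.
Proof. by move=> hT x; rewrite -scaleN1r linZ // scaleN1r. Qed.
Lemma linB T : lin T -> forall x y, T (x - y) = T x - T y.
Proof. by move=> hT x y; rewrite linD // linN. Qed.


Lemma posI T : pos_op ip T -> forall x, Im (ip (T x) x) = 0.
Proof. by move=> hp x; have [] := ge0C (hp x). Qed.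
Lemma posR T : pos_op ip T -> forall x, 0 <= Re (ip (T x) x).
Proof. by move=> hp x; have [] := ge0C (hp x). Qed.

Lemma herm T : lin T -> pos_op ip T -> forall x y, ip (T y) x = (ip (T x) y)^*.
Proof.
move=> hl hp x y.
have h1 := posI hp (x + y).
have h2 := posI hp (x + (0 +i* 1)%C *: y).
rewrite !(linD hl) !ipDl !ipDr !ImD (posI hp x) (posI hp y) in h1.
rewrite !(linD hl) !(linZ hl) !ipDl !ipDr !ipZl !ipZr !ImD !ImM !ReM !ImJ !ReJ (posI hp x) (posI hp y) /= in h2.
apply: ceq; rewrite ?ReJ ?ImJ; lra.
Qed.

Lemma Reherm T : lin T -> pos_op ip T -> forall x y, Re (ip (T y) x) = Re (ip (T x) y).
Proof. by move=> hl hp x y; rewrite herm // ReJ. Qed.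

Lemma quadCS (a b c : R) : 0 <= c -> (forall t : R, 0 <= a - 2 * t * b + t ^+ 2 * c) -> b ^+ 2 <= a * c.
Proof.
move=> hc ht.
have ha : 0 <= a by have := ht 0; rewrite expr0n /=; lra.
have [c0|cpos] := eqVneq c 0.
  have [b0|bn0] := eqVneq b 0; first by rewrite b0 c0 expr0n /= mulr0.
  have := ht ((a + 1) / (2 * b)); rewrite c0 mulr0 addr0.
  have -> : 2 * ((a + 1) / (2 * b)) * b = a + 1.
    by field; rewrite bn0.
  lra.
have cp : 0 < c by rewrite lt_neqAle eq_sym cpos hc.
have := ht (b / c).
have -> : a - 2 * (b / c) * b + (b / c) ^+ 2 * c = a - b ^+ 2 / c.
  by field; rewrite lt0r_neq0.
rewrite subr_ge0 ler_pdivrMr //.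
Qed.

Lemma CS T : lin T -> pos_op ip T -> forall x z, Re (ip (T x) z) ^+ 2 <= Re (ip (T x) x) * Re (ip (T z) z).
Proof.
move=> hl hp x z; apply: quadCS; first exact: posR.
move=> t; have := posR hp (x + ((- t)%:C)%C *: z).
rewrite !(linD hl) !(linZ hl) !ipDl !ipDr !ipZl !ipZr !ReD !ReM !ImJ !ReJ /=.
rewrite (Reherm hl hp z x) (posI hp z); lra.
Qed.

Lemma lin_id : lin id. Proof. by []. Qed.
Lemma pos_id : pos_op ip id. Proof. exact: (ip_ge0 H). Qed.

Lemma CS1 x z : Re (ip x z) <= nr x * nr z.
Proof.
have h := CS lin_id pos_id x z; rewrite /= -/(nq x) -/(nq z) -!nr_sqr -exprMn in h.
have := mulr_ge0 (nr_ge0 x) (nr_ge0 z); nra.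
Qed.

Lemma nqD x y : nq (x + y) = nq x + 2 * Re (ip x y) + nq y.
Proof. rewrite /nq !ipDl !ipDr !ReD (ReipC y x); lra. Qed.

Lemma nrD x y : nr (x + y) <= nr x + nr y.
Proof.
have h1 := CS1 x y; have h2 := nqD x y.
rewrite -!nr_sqr in h2.
have := nr_ge0 x; have := nr_ge0 y; have := nr_ge0 (x + y); nra.
Qed.

Lemma nqZ (t : R) x : nq (((t%:C)%C) *: x) = t ^+ 2 * nq x.
Proof. rewrite /nq ipZl ipZr !ReM !ImM ReJ ImJ /= ipxx_Im; lra. Qed.

Lemma nrZ (t : R) x : nr (((t%:C)%C) *: x) = `|t| * nr x.
Proof. by rewrite /nr nqZ sqrtrM ?sqr_ge0 // sqrtr_sqr. Qed.

Lemma nqN x : nq (- x) = nq x.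
Proof. by rewrite /nq ipNl ipNr opprK. Qed.
Lemma nrN x : nr (- x) = nr x.
Proof. by rewrite /nr nqN. Qed.
Lemma nrB x y : nr (x - y) = nr (y - x).
Proof. by rewrite -nrN opprB. Qed.

End Hilb.

Section Reals.
Variable R : realType.

Lemma bernoulli (h : R) n : 0 <= h -> 1 + n%:R * h <= (1 + h) ^+ n.
Proof.
move=> h0; elim: n => [|n IH]; first by rewrite expr0 mul0r addr0.
rewrite exprS -natr1.
have := mulr_ge0 (mulr_ge0 (ler0n R n) h0) h0.
have := ler_wpM2r (addr_ge0 ler01 h0) IH.
nra.
Qed.

Lemma geom_small (r eps : R) : 0 <= r -> r < 1 -> 0 < eps -> exists N : nat, r ^+ N < eps.
Proof.
move=> r0 r1 e0.
have [->|rn0] := eqVneq r 0; first by exists 1%N; rewrite expr1.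
have rp : 0 < r by rewrite lt_neqAle eq_sym rn0 r0.
pose h := r^-1 - 1.
have hp : 0 < h by rewrite /h subr_gt0 invf_gt1.
have x0 : 0 <= (eps * h)^-1 by rewrite invr_ge0 ltW // mulr_gt0.
exists (Num.bound (eps * h)^-1).
set n := Num.bound _.
have hn := archi_boundP x0; rewrite -/n in hn.
have hb := bernoulli n (ltW hp).
have e1 : r ^+ n * (1 + h) ^+ n = 1.
  by rewrite -exprMn /h addrC subrK divff ?expr1n // lt0r_neq0.
have rn0' : 0 <= r ^+ n := exprn_ge0 n r0.
have h1 : 1 < eps * h * n%:R.
  have h1 := hn; rewrite -(ltr_pM2l (mulr_gt0 e0 hp)) mulfV in h1 =>//; by rewrite lt0r_neq0 // mulr_gt0.
have h2 := ler_wpM2l rn0' hb; rewrite e1 in h2.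
have nh0 : 0 <= n%:R * h by rewrite mulr_ge0 // ltW.
rewrite ltNge; apply/negP => he.
have := ler_wpM2r nh0 he; nra.
Qed.

Lemma zero_small (a : R) : 0 <= a -> (forall eps, 0 < eps -> a <= eps) -> a = 0.
Proof.
move=> a0 h; apply/eqP; rewrite eq_le a0 andbT; apply/negP => /negP.
rewrite -ltNge => ap; have := h (a / 2); lra.
Qed.

End Reals.

Section Hilb2.
Variable R : realType.
Local Notation C := R[i].
Local Notation Re := complex.Re.
Local Notation Im := complex.Im.
Variable V : lmodType C.
Variable ip : V -> V -> C.
Hypothesis H : isHilbert ip.
Local Notation nr := (nr ip).
Local Notation nq := (nq ip).

Lemma bounded_real T : bounded_op ip T ->
  lin T /\ exists K : R, 0 < K /\ forall x, nr (T x) <= K * nr x.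
Proof.
case=> hl [K0 hK]; split => //; exists (`|Re K0| + 1); split.
  by have := normr_ge0 (Re K0); lra.
move=> x; have := hK x; rewrite !(hnormE H) lecE => /andP[_] /=.
rewrite ReM /= mulr0 subr0 => h.
have := ler_norm (Re K0); have := nr_ge0 ip x; nra.
Qed.

Lemma bounded_of T (K : R) : lin T -> (forall x, nr (T x) <= K * nr x) -> bounded_op ip T.
Proof.
move=> hl hK; split => //; exists ((K%:C)%C) => x.
by rewrite !(hnormE H) lecE /= mulr0 !mul0r addr0 subr0 eqxx hK.
Qed.

Lemma nr0 x : nr x = 0 -> x = 0.
Proof. by move=> h; apply: (nq0 H); rewrite -(nr_sqr H) h expr0n. Qed.

Lemma fixpt (F : V -> V) (r : R) : 0 <= r -> r < 1 ->
  (forall a b, nr (F a - F b) <= r * nr (a - b)) -> exists l, F l = l.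
Proof.
move=> r0 r1 hF.
pose u n := iter n F 0.
pose d := nr (u 1%N - u 0%N).
have d0 : 0 <= d := nr_ge0 ip _.
have hstep : forall n, nr (u n.+1 - u n) <= r ^+ n * d.
  elim=> [|n IH]; first by rewrite expr0 mul1r.
  rewrite /u !iterS -/(u n) -/(u n.+1) /=.
  apply: le_trans (hF _ _) _; rewrite exprS -mulrA ler_wpM2l //.
have hcs : forall k n, (1 - r) * nr (u k - u n) <= (r ^+ k + r ^+ n) * d.
  move=> k n.
  have e : u k - u n = (u k - u k.+1) + ((u k.+1 - u n.+1) + (u n.+1 - u n)).
    by rewrite !addrA !subrK.
  have t1 := nrD H (u k - u k.+1) ((u k.+1 - u n.+1) + (u n.+1 - u n)).
  rewrite -e in t1.
  have t2 := nrD H (u k.+1 - u n.+1) (u n.+1 - u n).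
  have t3 := hstep k; rewrite (nrB H) in t3.
  have t4 := hstep n.
  have t5 : nr (u k.+1 - u n.+1) <= r * nr (u k - u n) by exact: hF.
  have t6 := nr_ge0 ip (u k - u n).
  nra.
have cauchy : forall e : C, 0 < e -> exists N : nat, forall n k : nat,
    (N <= n)%N -> (N <= k)%N -> hnorm ip (u n - u k) < e.
  move=> e; rewrite ltcE => /andP[/eqP hIm hRe].
  have ep : 0 < Re e * (1 - r) / (2 * d + 1).
    by rewrite divr_gt0 ?mulr_gt0 //; lra.
  have [N hN] := geom_small r0 r1 ep.
  have hN' : r ^+ N * (2 * d + 1) < Re e * (1 - r).
    by rewrite -ltr_pdivlMr //; lra.
  exists N => n k hn hk; rewrite (hnormE H) ltcE /= hIm eqxx /=.
  have hk1 := hcs n k.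
  have m1 : r ^+ n <= r ^+ N := ler_wiXn2l r0 (ltW r1) hn.
  have m2 : r ^+ k <= r ^+ N := ler_wiXn2l r0 (ltW r1) hk.
  have rN : 0 <= r ^+ N := exprn_ge0 N r0.
  have x0 := nr_ge0 ip (u n - u k).
  have h3 : (r ^+ n + r ^+ k) * d <= r ^+ N * (2 * d + 1).
    have := ler_wpM2r d0 (lerD m1 m2); nra.
  nra.
have [l hl] := ip_complete H cauchy.
exists l.
have hz : nr (F l - l) = 0.
  apply: zero_small; first exact: nr_ge0.
  move=> eps ep.
  have ep2 : 0 < ((eps / 2)%:C)%C :> C by rewrite ltcR; lra.
  have [N hN] := hl _ ep2.
  have h1 := hN N (leqnn N); have h2 := hN N.+1 (leqnSn N).
  rewrite (hnormE H) ltcR in h1; rewrite (hnormE H) ltcR in h2.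
  have {}h2 : nr (F (u N) - l) < eps / 2 := h2.
  have e : F l - l = (F l - F (u N)) + (F (u N) - l) by rewrite addrA subrK.
  rewrite e; apply: le_trans (nrD H _ _) _.
  have h3 := hF l (u N); rewrite (nrB H l) in h3.
  have := nr_ge0 ip (u N - l); nra.
by apply/eqP; rewrite -subr_eq0; apply/eqP; apply: nr0.
Qed.


Lemma zmod_id1 (a a' x y y' : V) : (a + (x - y)) - (a' + (x - y')) = (a - a') - (y - y').
Proof.
rewrite opprD addrACA; congr (_ + _); rewrite opprB addrC addrA subrK opprB //.
Qed.

Lemma invertible_aux T (L c : R) : lin T -> 0 < L -> 0 < c -> c <= L ->
  (forall x, nr (T x) <= L * nr x) -> (forall x, c * nq x <= Re (ip (T x) x)) ->
  exists D, is_inverse ip T D.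
Proof.
move=> hl L0 c0 cL hL hc.
have inj : forall x y, T x = T y -> x = y.
  move=> x y hxy; apply/eqP; rewrite -subr_eq0; apply/eqP; apply: (nq0 H).
  have := hc (x - y); rewrite (linB hl) hxy subrr (ip0l H) Re0.
  have := nq_ge0 H (x - y); nra.
pose t := c / L ^+ 2.
have t0 : 0 < t by rewrite divr_gt0 // exprn_gt0.
have htL : t * L ^+ 2 = c by rewrite /t divfK // expf_neq0 // lt0r_neq0.
have surj : forall b, exists w, T w = b.
  move=> b.
  pose F w := w + ((t%:C)%C) *: (b - T w).
  pose q := 1 - t * c.
  have q0 : 0 <= q.
    rewrite /q subr_ge0 /t mulrAC -expr2 ler_pdivrMr ?exprn_gt0 // mul1r.
    nra.
  have q1 : q < 1 by rewrite /q; have := mulr_gt0 t0 c0; lra.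
  have [l hFl] : exists l, F l = l.
    apply: (@fixpt F (Num.sqrt q)); first exact: sqrtr_ge0.
      by rewrite -sqrtr1 ltr_sqrt // ltr01.
    move=> a a'.
    have -> : F a - F a' = (a - a') + (- (t%:C)%C) *: T (a - a') .
      by rewrite /F (linB hl) !scalerBr zmod_id1 !scaleNr opprK opprB (addrC (- _)).
    set e := a - a'.
    have hq : nq (e + (- (t%:C)%C) *: T e) <= q * nq e.
      rewrite (nqD H) scaleNr (nqN H) (nqZ H) (ipNr H) (ipZr H) ReN ReM ReJ ImJ /= (ReipC H (T e)) oppr0 mul0r subr0.
      have h1 := hc e.
      have h2 := hL e.
      have h3 : nq (T e) <= L ^+ 2 * nq e.
        rewrite -!(nr_sqr H) -exprMn !expr2; apply: ler_pM => //; exact: nr_ge0.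
      have h4 : t ^+ 2 * nq (T e) <= t ^+ 2 * (L ^+ 2 * nq e) by apply: ler_wpM2l => //; rewrite exprn_ge0 // ltW.
      have h5 : t ^+ 2 * (L ^+ 2 * nq e) = t * c * nq e by rewrite -htL; ring.
      rewrite /q; have := nq_ge0 H e; nra.
    rewrite /nr -sqrtrM // ler_sqrt //; rewrite mulr_ge0 // nq_ge0 //.
  exists l.
  have h0 : (t%:C)%C *: (b - T l) = 0 by apply: (addrI l); rewrite addr0; exact: hFl.
  move/eqP: h0; rewrite scaler_eq0 => /orP[/eqP ht|/eqP hb].
    by have := congr1 (@complex.Re R) ht; rewrite /= => ht'; move: t0; rewrite ht' ltxx.
  by apply/esym/eqP; rewrite -subr_eq0 hb.
pose D := fun b => proj1_sig (constructive_indefinite_description _ (surj b)).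
have hD : forall b, T (D b) = b by move=> b; rewrite /D; case: constructive_indefinite_description.
exists D; split; last first.
  by split => // x; apply: inj; rewrite hD.
apply: (@bounded_of D c^-1).
  by move=> a x y; apply: inj; rewrite hD hl !hD.
move=> x.
have h1 := hc (D x); rewrite hD in h1.
have h2 := CS1 H x (D x).
rewrite -(nr_sqr H) in h1.
have h3 : c * nr (D x) <= nr x.
  have := nr_ge0 ip (D x); have := nr_ge0 ip x.
  nra.
by rewrite ler_pdivlMl // mulrC.
Qed.

Lemma invertible T (L c : R) : lin T -> 0 < L -> 0 < c ->
  (forall x, nr (T x) <= L * nr x) -> (forall x, c * nq x <= Re (ip (T x) x)) ->
  exists D, is_inverse ip T D.
Proof.
move=> hl L0 c0 hL hc; case: (leP c L) => [cL|Lc].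
  exact: (invertible_aux hl L0 c0 cL hL hc).
apply: (invertible_aux hl L0 L0 (lexx L) hL) => x.
apply: le_trans (hc x); apply: ler_wpM2r; [exact: nq_ge0 | exact: ltW].
Qed.

Lemma lin_comb (S T : V -> V) (a : C) : lin S -> lin T -> lin (fun x => a *: S x + T x).
Proof.
move=> hS hT b x y; rewrite hS hT !scalerDr !scalerA (mulrC a b) -!scalerA.
by rewrite addrACA.
Qed.

Lemma lin_comp (S T : V -> V) : lin S -> lin T -> lin (fun x => S (T x)).
Proof. by move=> hS hT a x y; rewrite hT hS. Qed.

Lemma nrZC (a : C) x : nr (a *: x) = Num.sqrt (Re a ^+ 2 + Im a ^+ 2) * nr x.
Proof.
have e : nq (a *: x) = (Re a ^+ 2 + Im a ^+ 2) * nq x.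
  rewrite /nq (ipZl H) (ipZr H) !ReM !ImM ReJ ImJ ipxx_Im //; lra.
by rewrite /nr e sqrtrM // addr_ge0 // sqr_ge0.
Qed.

Lemma bounded_comb (S T : V -> V) (a : C) : bounded_op ip S -> bounded_op ip T ->
  bounded_op ip (fun x => a *: S x + T x).
Proof.
move=> /bounded_real [hS [KS [KS0 hKS]]] /bounded_real [hT [KT [KT0 hKT]]].
apply: (@bounded_of _ (Num.sqrt (Re a ^+ 2 + Im a ^+ 2) * KS + KT)); first exact: lin_comb.
move=> x; apply: le_trans (nrD H _ _) _; rewrite nrZC mulrDl -mulrA.
apply: lerD => //; apply: ler_wpM2l => //; exact: sqrtr_ge0.
Qed.

Lemma bounded_comp (S T : V -> V) : bounded_op ip S -> bounded_op ip T ->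
  bounded_op ip (fun x => S (T x)).
Proof.
move=> /bounded_real [hS [KS [KS0 hKS]]] /bounded_real [hT [KT [KT0 hKT]]].
apply: (@bounded_of _ (KS * KT)); first exact: lin_comp.
move=> x; apply: le_trans (hKS _) _; rewrite -mulrA ler_wpM2l // ltW //.
Qed.

Lemma bounded_scale (S : V -> V) (a : C) : bounded_op ip S -> bounded_op ip (fun x => a *: S x).
Proof.
move=> /bounded_real [hS [KS [KS0 hKS]]].
apply: (@bounded_of _ (Num.sqrt (Re a ^+ 2 + Im a ^+ 2) * KS)).
  by move=> b x y; rewrite hS scalerDr !scalerA mulrC.
move=> x; rewrite nrZC -mulrA; apply: ler_wpM2l => //; exact: sqrtr_ge0.
Qed.

Lemma bounded_id : bounded_op ip id.
Proof. by apply: (@bounded_of _ 1) => // x; rewrite mul1r. Qed.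

End Hilb2.

Section Final.
Variable R : realType.

Lemma final_ineq (M m a b s : R) : 0 < m -> m < M -> 0 <= a -> 0 <= b -> 0 <= s ->
  s ^+ 2 <= a * b ->
  (M + m) * s <= ((M + m) / (2 * Num.sqrt (M * m))) ^+ 2 * a + M * m * b.
Proof.
move=> m0 mM a0 b0 s0 hs.
have n0 : 0 < M * m by apply: mulr_gt0 => //; lra.
set n := M * m in n0 *; set p := M + m.
have p0 : 0 < p by rewrite /p; lra.
have -> : ((p / (2 * Num.sqrt n)) ^+ 2) = p ^+ 2 / (4 * n).
  by rewrite expr_div_n exprMn sqr_sqrtr ?ltW // -natrX.
set kk := p ^+ 2 / (4 * n).
have hk : kk * (4 * n) = p ^+ 2 by rewrite /kk divfK // mulf_neq0 // lt0r_neq0 //; lra.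
suff : 0 <= p ^+ 2 * a + 4 * n ^+ 2 * b - 4 * n * p * s.
  move=> h; have : 0 <= (4 * n) * (kk * a + n * b - p * s).
    have -> : (4 * n) * (kk * a + n * b - p * s) = kk * (4 * n) * a + 4 * n ^+ 2 * b - 4 * n * p * s by ring.
    by rewrite hk.
  rewrite pmulr_rge0; [lra | by apply: mulr_gt0 => //; lra].
have [a00|an0] := eqVneq a 0.
  rewrite a00 mul0r in hs; rewrite a00.
  have s00 : s = 0 by apply/eqP; rewrite -sqrf_eq0 eq_le hs sqr_ge0.
  rewrite s00 !mulr0 add0r subr0.
  by apply: mulr_ge0 => //; apply: mulr_ge0 => //; apply: exprn_ge0; apply: ltW.
have ap : 0 < a by rewrite lt_neqAle eq_sym an0 a0.
rewrite -(pmulr_rge0 _ ap).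
have := sqr_ge0 (p * a - 2 * n * s).
have := ler_wpM2l (mulr_ge0 (ltW n0) (ltW n0)) hs.
nra.
Qed.

End Final.

Local Notation Re := complex.Re.
Local Notation Im := complex.Im.
Unset Implicit Arguments.

Theorem mainTheorem3 (R : realType) (V W : lmodType R[i])
    (ipV : V -> V -> R[i]) (ipW : W -> W -> R[i])
    (hV : isHilbert ipV) (hW : isHilbert ipW)
    (Phi : (V -> V) -> (W -> W)) (hPhi : unital_pos_linear ipV ipW Phi)
    (A B Ainv : V -> V) (m M : R)
    (hA : bounded_op ipV A) (hApos : pos_op ipV A) (hAinv : is_inverse ipV A Ainv)
    (hB : bounded_op ipV B)
    (hm : 0 < m) (hmM : m < M)
    (hmB : loewner_le ipV (op_scale (cR m) A) B)
    (hBM : loewner_le ipV B (op_scale (cR M) A)) :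
  (exists D, is_inverse ipW (Phi A) D) /\
  forall D : W -> W, is_inverse ipW (Phi A) D ->
    loewner_le ipW (Phi (fun x => B (Ainv (B x))))
      (op_scale (cR (((M + m) / (2 * Num.sqrt (M * m))) ^+ 2))
         (fun y => Phi B (D (Phi B y)))).
Proof.
have [hlA [KA [KA0 hKA]]] := bounded_real hV hA.
have [hlB _] := bounded_real hV hB.
case: (hAinv) => hAi [hAAi hAiA].
have [hlAi [Ki [Ki0 hKi]]] := bounded_real hV hAi.
case: hPhi => hPb [hPl [hPp hP1]].
have hP : forall x, 0 <= ipV ((M%:C)%C *: A x - B x) x := hBM.
have hQ : forall x, 0 <= ipV (B x - (m%:C)%C *: A x) x := hmB.
have hlP : lin (fun x => (M%:C)%C *: A x - B x).
  apply: (lin_comb _ hlA) => a x y; by rewrite hlB opprD scalerN.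
have hAip : pos_op ipV Ainv.
  move=> w; rewrite -{2}(hAAi w) (ip_conj hV) conjC_ge0; exact: hApos.
have hcA : forall x, Ki^-1 * nq ipV x <= Re (ipV (A x) x).
  move=> x.
  have h1 := CS hV hlAi hAip (A x) x; rewrite hAiA (ReipC hV (A x) x) in h1.
  have h2 := CS1 hV (Ainv x) x.
  have h3 := ler_wpM2r (nr_ge0 ipV x) (hKi x).
  have h4 := posR hApos x.
  have h5 := nr_sqr hV x; rewrite expr2 in h5.
  rewrite -/(nq ipV x) -(nr_sqr hV x) in h1.
  rewrite mulrC ler_pdivrMr // -h5.
  set n := nr ipV x in h1 h2 h3 h5 *.
  have n0 : 0 <= n := nr_ge0 ipV x.
  have h6 : Re (ipV (Ainv x) x) <= Ki * (n * n) by rewrite mulrA; exact: le_trans h2 h3.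
  have h7 := ler_wpM2l h4 h6.
  have h8 := le_trans h1 h7.
  rewrite !expr2 mulrA in h8.
  have N0 : 0 <= n * n := mulr_ge0 n0 n0.
  have [e0|en0] := eqVneq (n * n) 0.
    by rewrite e0 mulr_ge0 // ltW.
  have Np : 0 < n * n by rewrite lt_neqAle eq_sym en0 N0.
  rewrite -(ler_pM2r Np); move: h8; rewrite !mulrA //.
have hYb := hPb A hA.
have [hlY [KY [KY0 hKY]]] := bounded_real hW hYb.
have hYc : forall y, Ki^-1 * nq ipW y <= Re (ipW (Phi A y) y).
  move=> y.
  pose S := fun x => (- ((Ki^-1)%:C)%C) *: id x + A x.
  have hSb : bounded_op ipV S := bounded_comb hV _ (bounded_id hV) hA.
  have hSp : pos_op ipV S.
    move=> x; rewrite /S /= (ipDl hV) (ipZl hV); apply: ge0C'.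
      by rewrite ImD ImM ImN (ipxx_Im hV) (posI hApos x) /=; lra.
    rewrite ReD ReM ReN ImN /= (ipxx_Im hV) -/(nq ipV x); have := hcA x; lra.
  have := hPp S hSb hSp y.
  rewrite /S (hPl _ _ _ (bounded_id hV) hA) hP1 /= (ipDl hW) (ipZl hW).
  move/ge0C => [_]; rewrite ReD ReM ReN ImN /= (ipxx_Im hW) -/(nq ipW y); lra.
have hKi0 : 0 < Ki^-1 by rewrite invr_gt0.
have [D0 hD0] := invertible hW hlY KY0 hKi0 hKY hYc.
split; first by exists D0.
move=> D [hDb [hYD hDY]].
pose a1 : R[i] := ((M + m)%:C)%C.
pose a2 : R[i] := (- (M * m)%:C)%C.
pose G3 := fun x => (-1 : R[i]) *: B (Ainv (B x)).
pose G2 := fun x => a2 *: A x + G3 x.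
pose G := fun x => a1 *: B x + G2 x.
have hBABb : bounded_op ipV (fun x => B (Ainv (B x))) := bounded_comp hV hB (bounded_comp hV hAi hB).
have hG3b : bounded_op ipV G3 := bounded_scale hV _ hBABb.
have hG2b : bounded_op ipV G2 := bounded_comb hV _ hA hG3b.
have hGb : bounded_op ipV G := bounded_comb hV _ hB hG2b.
have hPs : forall (a : R[i]) S, bounded_op ipV S -> Phi (fun x => a *: S x) = (fun y => a *: Phi S y).
  move=> a S hS.
  have e : (fun x => a *: S x) = (fun x => (a - 1) *: S x + S x).
    by apply: functional_extensionality => x; rewrite scalerBl scale1r subrK.
  rewrite e hPl //; apply: functional_extensionality => y; rewrite scalerBl scale1r subrK //.
have hPG : Phi G = fun y => a1 *: Phi B y + (a2 *: Phi A y + (-1) *: Phi (fun x => B (Ainv (B x))) y).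
  rewrite /G hPl //; apply: functional_extensionality => y; congr (_ + _).
  by rewrite /G2 hPl // /G3 hPs.
have hBpos : pos_op ipV B.
  move=> x.
  have e : ipV (B x) x = ipV (B x - (m%:C)%C *: A x) x + (m%:C)%C * ipV (A x) x.
    by rewrite (ipBl hV) (ipZl hV) subrK.
  by rewrite e addr_ge0 // mulr_ge0 // ler0c ltW.
have hGp : pos_op ipV G.
  move=> x.
  set y := (M%:C)%C *: A x - B x.
  set z := Ainv y.
  have hz : A z = y := hAAi y.
  have eBz : B z = (M%:C)%C *: B x - B (Ainv (B x)).
    by rewrite /z /y (linB hlAi) (linZ hlAi) hAiA (linB hlB) (linZ hlB).
  have E : ipV ((M%:C)%C *: y - ((M%:C)%C *: B x - B (Ainv (B x)))) x = (ipV (A z) z)^*.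
    by have := herm hV hlP hP x z; rewrite /= hz eBz -/y => ->.
  rewrite /y !(ipBl hV) !(ipZl hV) !(ipBl hV) !(ipZl hV) in E.
  have ER := congr1 (@complex.Re R) E; have EI := congr1 (@complex.Im R) E.
  rewrite !(ReB, ReRM, ReJ) in ER; rewrite !(ImB, ImRM, ImJ) in EI.
  have hcs : Re (ipV (A z) z) ^+ 2 <= Re (ipV y x) * Re (ipV ((M%:C)%C *: A z - B z) z).
    by have := CS hV hlP hP x z; rewrite /= -/y hz.
  rewrite /y !(ipBl hV) !(ipZl hV) !ReB !ReRM in hcs.
  have hQz := hQ z; rewrite (ipBl hV) (ipZl hV) in hQz; have [_ hQzR] := ge0C hQz.
  rewrite ReB ReRM in hQzR.
  have hPx := hP x; rewrite (ipBl hV) (ipZl hV) in hPx; have [_ hPxR] := ge0C hPx.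
  rewrite ReB ReRM in hPxR.
  have [hIt hRt] := ge0C (hApos z).
  have [hIa hRa] := ge0C (hApos x).
  have [hIb hRb] := ge0C (hBpos x).
  rewrite /G /G2 /G3 !(ipDl hV) !(ipZl hV); apply: ge0C'.
    rewrite /a1 /a2 !ImD !ImM !ImN /= hIa hIb; rewrite hIa hIb hIt in EI; lra.
  rewrite /a1 /a2 !ReD !ReM !ReN !ImN /= hIa hIb.
  set tau := Re (ipV (A z) z) in ER hcs hQzR hRt *.
  set p := M * Re (ipV (A x) x) - Re (ipV (B x) x) in hcs hPxR.
  have h1 : M * tau - Re (ipV (B z) z) <= (M - m) * tau by lra.
  have h2 := le_trans hcs (ler_wpM2l hPxR h1).
  have h3 : tau <= (M - m) * p.
    have [t0|tn0] := eqVneq tau 0.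
      by rewrite t0 mulr_ge0 // subr_ge0 ltW.
    have tp : 0 < tau by rewrite lt_neqAle eq_sym tn0 hRt.
    rewrite -(ler_pM2l tp) -expr2; apply: le_trans h2 _.
    by have -> : tau * ((M - m) * p) = p * ((M - m) * tau) by ring.
  rewrite /p in h3; lra.
have hGWp := hPp G hGb hGp; rewrite hPG in hGWp.
have hXp := hPp B hB hBpos.
have [hlX _] := bounded_real hW (hPb B hB).
have hYp := hPp A hA hApos.
move=> y; rewrite /op_scale /cR /=.
set k := ((M + m) / (2 * Num.sqrt (M * m))) ^+ 2.
set u := Phi B y.
set w := D u.
have hw : Phi A w = u := hYD u.
rewrite (ipBl hW) (ipZl hW) (herm hW hlX hXp y w) -/u -hw.
have hG := hGWp y.
rewrite (ipDl hW) (ipZl hW) (ipDl hW) (ipZl hW) (ipZl hW) -/u in hG.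
have hcs := CS hW hlY hYp w y; rewrite {1}hw in hcs.
have [hIs hRs] := ge0C (hXp y); rewrite -/u in hIs hRs.
have [hIb hRb] := ge0C (hYp y).
have [hIa hRa] := ge0C (hYp w).
move/ge0C: hG => [hGI hGR].
rewrite /a1 /a2 !ImD !ReD !ImM !ReM !ImN !ReN /= hIs hIb in hGI hGR.
apply: ge0C'.
  rewrite ImB ImRM ImJ hIa; lra.
rewrite ReB ReRM ReJ.
have := final_ineq hm hmM hRa hRb hRs hcs.
rewrite -/k; lra.
Qed.
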